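(* Let $N\in\mathbb{Z}^+$ and $\boldsymbol{\mu}\in\mathbb{R}_+^N$ with $0\le\mu[n]\le1$ for all $n$, and suppose $t=\sum_{n=1}^N\mu[n]\ge1$ is not an integer. Define $m_1[n]=\big[\mu[n]-(t-\lfloor t\rfloor)\big]^+$, $m_2[n]=\big[\mu[n]-(\lceil t\rceil-t)\big]^+$ and $$r=\frac{\lfloor t\rfloor(\lceil t\rceil-t)-\sum_{n=1}^N m_1[n]}{t-\sum_{n=1}^N m_1[n]-\sum_{n=1}^N m_2[n]}.$$ Then $r$ is well defined (the denominator is strictly positive) and $0\le r<1$.
   Context: $[x]^+=\max(x,0)$. *)

(* Defs.v *)
From mathcomp Require Import all_boot all_order all_algebra.
From mathcomp Require Import all_classical all_reals.
Set Implicit Arguments. Unset Strict Implicit. Unset Printing Implicit Defensive.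
Import Order.TTheory GRing.Theory Num.Theory.
Local Open Scope ring_scope.

Definition pospart (R : realDomainType) (x : R) : R := Num.max x 0.

(* Main.v *)
Require Import Defs.
From mathcomp Require Import all_boot all_order all_algebra.
From mathcomp Require Import all_classical all_reals.
From mathcomp Require Import lra.
Import Order.TTheory GRing.Theory Num.Theory.
Local Open Scope ring_scope.

Lemma key (R : realType) (N : nat) (mu : 'I_N -> R)
  (hmu : forall n, 0 <= mu n <= 1) (th : R) (h0 : 0 <= th <= 1) :
  exists k : nat, \sum_(n < N) pospart (mu n - th) <= k%:R * (1 - th) /\
     \sum_(n < N) pospart (mu n - th) <= \sum_(n < N) mu n - k%:R * th.
Proof.
exists (\sum_(n < N) (((th < mu n)%R : bool) : nat))%N.
rewrite natr_sum big_distrl /= mulr_suml -sumrB; split; apply: ler_sum => n _;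
  have /andP [h1 h2] := hmu n; rewrite /pospart;
  case: (ltrP th (mu n)) => h /=.
- rewrite max_l ?mul1r; lra.
- rewrite max_r ?mul0r; lra.
- rewrite max_l ?mul1r; lra.
- rewrite max_r ?mul0r; lra.
Qed.

Theorem lemma5 (R : realType) (N : nat) (hN : (0 < N)%N) (mu : 'I_N -> R)
  (hmu : forall n, 0 <= mu n <= 1)
  (ht1 : 1 <= \sum_(n < N) mu n)
  (htint : \sum_(n < N) mu n \isn't a Num.int) :
  let t := \sum_(n < N) mu n in
  let fl : R := (Num.floor t)%:~R in
  let cl : R := (Num.ceil t)%:~R in
  let m1 := fun n => pospart (mu n - (t - fl)) in
  let m2 := fun n => pospart (mu n - (cl - t)) in
  let den := t - \sum_(n < N) m1 n - \sum_(n < N) m2 n in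
  let r := (fl * (cl - t) - \sum_(n < N) m1 n) / den in
  0 < den /\ 0 <= r /\ r < 1.
Proof.
move=> t fl cl m1 m2 den r.
have hc : cl = fl + 1.
  by rewrite /cl /fl ceil_floor htint intrD.
have hfle : fl <= t by exact: floor_le.
have hft : fl != t.
  apply/negP => /eqP e; move: htint; rewrite -/t -e /fl.
  by rewrite intr_int.
have hflt : fl < t by rewrite lt_neqAle hft hfle.
have ht1' : 1 <= t by exact: ht1.
have htc : t < cl.
  rewrite hc /fl -(intrD _ _ 1); by have /andP[_ ->] := floor_itv t.
have hf0 : 0 <= fl.
  by rewrite /fl ler0z floor_ge0; exact: le_trans ler01 ht1.
have hcase : forall k : nat, k%:R <= fl \/ fl + 1 <= k%:R.
  move=> k; rewrite /fl.
  case: (lerP (k%:Z) (Num.floor t)) => h.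
    by left; rewrite -(ler_int R) in h.
  right; rewrite -lezD1 -(ler_int R) in h; by rewrite -(intrD _ _ 1).
have [k1 [h11 h12]] := @key _ _ _ hmu (t - fl) ltac:(apply/andP; split; lra).
have [k2 [h21 h22]] := @key _ _ _ hmu (cl - t) ltac:(apply/andP; split; lra).
rewrite -/t in h12 h22.
set S1 := \sum_(n < N) pospart (mu n - (t - fl)) in h11 h12.
set S2 := \sum_(n < N) pospart (mu n - (cl - t)) in h21 h22.
rewrite hc in h11 h12 h21 h22 *.
have hS1 : S1 <= fl * (fl + 1 - t).
  case: (hcase k1) => hk.
    have := @mulr_ge0 _ (fl - k1%:R) (fl + 1 - t) ltac:(lra) ltac:(lra); nra.
  have := @mulr_ge0 _ (k1%:R - fl - 1) (t - fl) ltac:(lra) ltac:(lra); nra.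
have hS2 : S2 < (fl + 1) * (t - fl).
  case: (hcase k2) => hk.
    have := @mulr_ge0 _ (fl - k2%:R) (t - fl) ltac:(lra) ltac:(lra); nra.
  have := @mulr_ge0 _ (k2%:R - fl - 1) (fl + 1 - t) ltac:(lra) ltac:(lra); nra.
have hS10 : 0 <= S1 by apply: sumr_ge0 => n _; rewrite /pospart le_max lexx orbT.
have hden : 0 < den by rewrite /den /m1 /m2 -/S1 -/S2; nra.
split => //; split.
  by apply: divr_ge0; [rewrite /m1 -/S1 hc; nra | exact: ltW].
rewrite /r ltr_pdivrMr // mul1r /den /m1 /m2 -/S1 -/S2 hc; nra.
Qed.
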